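(* Let $\theta>1$, $r\in(\theta^{-1},\theta^{-1/2}]$ and $\rho\in(0,1]$, and set $s_\rho:=\max\big(1,\frac1\rho\big(\frac{\ln\theta}{\ln(r\theta)}-2\big)\big)$. Then for every $n\ge1$, every price sequence $p\in[1,\theta]^n$ with maximum $p^*$ and every prediction $y\in[1,\theta]$, \[ \frac{\mathsf{A}^\rho_r(p,y)}{p^*}\ \ge\ \max\Big(r,\ \frac{1}{r\theta}\,\mathcal{E}(p^*,y)^{s_\rho}\Big). \]
   Context: One-max search: fix $\theta>1$. An instance is a sequence of prices $p=(p_1,\dots,p_n)\in[1,\theta]^n$, revealed one at a time; the algorithm receives at the start a prediction $y\in[1,\theta]$ of $p^*:=\max_ip_i$. At each step the algorithm irrevocably accepts the current price (payoff = that price) or rejects it; if nothing is accepted by step $n$ the payoff is $1$. For $\Phi:[1,\theta]\to[1,\theta]$, the threshold algorithm $\mathsf{A}_\Phi$ accepts the first $p_i$ with $p_i\ge\Phi(y)$. Define $\varphi_r(z)=\frac{r\theta-1}{1-r}+\frac{1-r^2\theta}{1-r}\cdot\frac{z}{r\theta}$ (the line through $(r\theta,r\theta)$ and $(\theta,1/r)$), and for $\rho\in(0,1]$ the threshold \[ \Phi^\rho_r(y)=\begin{cases} r\theta & y\in[1,r\theta)\\ \varphi_r(y) & y\in[r\theta,\tfrac1r)\\ \varphi_r(\tfrac1r)+\big(\tfrac1r-\varphi_r(\tfrac1r)\big)\dfrac{y-\tfrac1r}{\rho(\theta-\tfrac1r)} & y\in[\tfrac1r,\tfrac1r+\rho(\theta-\tfrac1r))\\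 \tfrac1r & y\in[\tfrac1r+\rho(\theta-\tfrac1r),\theta].\end{cases} \] $\mathsf{A}^\rho_r:=\mathsf{A}_{\Phi^\rho_r}$. The multiplicative error is $\mathcal{E}(p^*,y)=\min\{p^*/y,\,y/p^*\}\in[\theta^{-1},1]$. *)

(* Defs.v *)
From Stdlib Require Import Reals List.
Import ListNotations.
Open Scope R_scope.

(* phi_r(z): the line through (r*theta, r*theta) and (theta, 1/r). *)
Definition phi_r (theta r z : R) : R :=
  (r * theta - 1) / (1 - r) + (1 - r ^ 2 * theta) / (1 - r) * (z / (r * theta)).

Definition Phi (theta r rho y : R) : R :=
  if Rlt_dec y (r * theta) then r * theta
  else if Rlt_dec y (/ r) then phi_r theta r y
  else if Rlt_dec y (/ r + rho * (theta - / r)) then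
    phi_r theta r (/ r)
    + (/ r - phi_r theta r (/ r)) * ((y - / r) / (rho * (theta - / r)))
  else / r.

Fixpoint threshold_payoff (t : R) (p : list R) : R :=
  match p with
  | [] => 1
  | x :: q => if Rle_dec t x then x else threshold_payoff t q
  end.

Definition A_Phi (Phi : R -> R) (p : list R) (y : R) : R :=
  threshold_payoff (Phi y) p.

Definition A_rho_r (theta r rho : R) (p : list R) (y : R) : R :=
  A_Phi (Phi theta r rho) p y.

Definition pmax (p : list R) : R :=
  match p with
  | [] => 1
  | x :: q => fold_right Rmax x q
  end.

Definition mult_error (pstar y : R) : R := Rmin (pstar / y) (y / pstar).

Definition s_rho (theta r rho : R) : R :=
  Rmax 1 (/ rho * (ln theta / ln (r * theta) - 2)).

(* Main.v *)
Require Import Defs.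
From Stdlib Require Import Reals List Lra Psatz.
Import ListNotations.
Open Scope R_scope.

Lemma ln_le_sub1 x : 0 < x -> ln x <= x - 1.
Proof. intros. pose proof (exp_ineq1_le (ln x)). rewrite exp_ln in H0; lra. Qed.

Lemma m_pos b x : 0 < x -> 0 <= b <= 1 -> 0 < 1 - b + b * x.
Proof.
  intros. destruct (Req_dec b 1). subst. lra.
  assert (0 <= b * x) by nra. lra.
Qed.

Lemma bern b x : 0 < x -> 0 <= b <= 1 -> b * ln x <= ln (1 - b + b * x).
Proof.
  intros Hx Hb. pose proof (m_pos b x Hx Hb) as Hm.
  set (m := 1 - b + b * x) in *.
  pose proof (ln_le_sub1 (/ m) (Rinv_0_lt_compat _ Hm)) as H1.
  assert (Hxm : 0 < x / m) by (apply Rdiv_lt_0_compat; lra).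
  pose proof (ln_le_sub1 (x / m) Hxm) as H2.
  rewrite ln_Rinv in H1 by lra.
  unfold Rdiv in H2. rewrite ln_mult in H2 by (auto; apply Rinv_0_lt_compat; lra).
  rewrite ln_Rinv in H2 by lra.
  assert (E : (1 - b) * (/ m - 1) + b * (x * / m - 1) = 0).
  { unfold m in *. field. lra. }
  assert (A1 : (1 - b) * (- ln m) <= (1 - b) * (/ m - 1)) by (apply Rmult_le_compat_l; lra).
  assert (A2 : b * (ln x + - ln m) <= b * (x * / m - 1)) by (apply Rmult_le_compat_l; lra).
  lra.
Qed.

Lemma exp_mono x y : x <= y -> exp x <= exp y.
Proof. intros H. destruct (Rle_lt_or_eq_dec _ _ H). left; apply exp_increasing; auto. subst; lra. Qed.

Lemma tangent a y z : 0 < y -> 0 < z -> 0 <= a <= 1 ->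
  exp (a * ln z) <= exp (a * ln y) * (1 - a + a * (z / y)).
Proof.
  intros Hy Hz Ha.
  assert (Hzy : 0 < z / y) by (apply Rdiv_lt_0_compat; lra).
  pose proof (bern a (z / y) Hzy Ha) as B.
  pose proof (m_pos a (z / y) Hzy Ha) as Hm.
  unfold Rdiv at 1 in B. rewrite ln_mult in B by (auto; apply Rinv_0_lt_compat; lra).
  rewrite ln_Rinv in B by lra.
  replace (exp (a * ln y) * (1 - a + a * (z / y)))
    with (exp (a * ln y + ln (1 - a + a * (z / y))))
    by (rewrite exp_plus, exp_ln; auto).
  apply exp_mono; nra.
Qed.

Lemma div01 u v : 0 <= u <= v -> 0 < v -> 0 <= u / v <= 1.
Proof.
  intros Hu Hv. split.
  - unfold Rdiv. apply Rmult_le_pos; [lra|]. left; apply Rinv_0_lt_compat; lra.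
  - apply (Rmult_le_reg_r v); auto. unfold Rdiv. rewrite Rmult_assoc, Rinv_l; lra.
Qed.

Lemma seg c0 a y1 y2 y T1 T2 : 0 < y1 -> y1 < y2 -> y1 <= y <= y2 -> 0 <= a <= 1 ->
  T1 <= exp (c0 + a * ln y1) -> T2 <= exp (c0 + a * ln y2) ->
  T1 + (T2 - T1) * ((y - y1) / (y2 - y1)) <= exp (c0 + a * ln y).
Proof.
  intros H1 H12 Hy Ha HT1 HT2.
  rewrite exp_plus in HT1, HT2 |- *.
  set (l := (y - y1) / (y2 - y1)).
  assert (Hl : 0 <= l <= 1) by (unfold l; apply div01; lra).
  pose proof (exp_pos c0) as HC.
  pose proof (tangent a y y1 ltac:(lra) H1 Ha) as t1.
  pose proof (tangent a y y2 ltac:(lra) ltac:(lra) Ha) as t2.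
  set (C := exp c0) in *. set (P := exp (a * ln y)) in *.
  set (P1 := exp (a * ln y1)) in *. set (P2 := exp (a * ln y2)) in *.
  assert (Id : (1 - l) * (1 - a + a * (y1 / y)) + l * (1 - a + a * (y2 / y)) = 1).
  { unfold l. field. lra. }
  assert (S1 : (1 - l) * T1 <= (1 - l) * (C * P1)) by (apply Rmult_le_compat_l; lra).
  assert (S2 : l * T2 <= l * (C * P2)) by (apply Rmult_le_compat_l; lra).
  assert (S3 : (1 - l) * (C * P1) <= (1 - l) * (C * (P * (1 - a + a * (y1 / y))))).
  { apply Rmult_le_compat_l; [lra|]. apply Rmult_le_compat_l; lra. }
  assert (S4 : l * (C * P2) <= l * (C * (P * (1 - a + a * (y2 / y))))).
  { apply Rmult_le_compat_l; [lra|]. apply Rmult_le_compat_l; lra. }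
  assert (E : (1 - l) * (C * (P * (1 - a + a * (y1 / y)))) + l * (C * (P * (1 - a + a * (y2 / y)))) = C * P).
  { transitivity (C * P * ((1 - l) * (1 - a + a * (y1 / y)) + l * (1 - a + a * (y2 / y)))).
    ring. rewrite Id; ring. }
  lra.
Qed.
Lemma payoff_cases T p :
  T <= threshold_payoff T p \/ (threshold_payoff T p = 1 /\ Forall (fun x => x < T) p).
Proof.
  induction p as [|x q IH]; simpl.
  - right; split; auto.
  - destruct (Rle_dec T x). left; auto.
    destruct IH as [IH|[IH1 IH2]]. left; auto. right; split; auto.
    constructor; auto; lra.
Qed.

Lemma fold_max x q :
  (fold_right Rmax x q = x \/ In (fold_right Rmax x q) q) /\
  x <= fold_right Rmax x q /\ Forall (fun z => z <= fold_right Rmax x q) q.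
Proof.
  induction q as [|z q IH]; simpl.
  - split; [left; auto|split; [lra|constructor]].
  - destruct IH as [IH1 [IH2 IH3]].
    set (m := fold_right Rmax x q) in *.
    unfold Rmax; destruct (Rle_dec z m).
    + split. destruct IH1; [left|right; right]; auto.
      split. lra. constructor. auto. eapply Forall_impl; [|exact IH3]. simpl; intros; lra.
    + split. right; left; auto. split. lra. constructor. lra.
      eapply Forall_impl; [|exact IH3]. simpl; intros; lra.
Qed.

Lemma pmax_props p theta : (1 <= length p)%nat -> Forall (fun x => 1 <= x <= theta) p ->
  In (pmax p) p /\ 1 <= pmax p <= theta.
Proof.
  intros Hl HF. destruct p as [|x q]; simpl in Hl. lia.
  unfold pmax. destruct (fold_max x q) as [H1 _].
  assert (Hin : In (fold_right Rmax x q) (x :: q)).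
  { destruct H1 as [H1|H1]; [left; auto|right; auto]. }
  split; auto. rewrite Forall_forall in HF. apply HF; auto.
Qed.
Lemma line_facts a ir th z : 1 < a -> a <= ir -> ir < th -> a * ir = th -> a <= z <= th ->
  let L := a + (ir - a) * ((z - a) / (th - a)) in
  a <= L <= ir /\ L <= z /\ z <= a * L.
Proof.
  intros Ha Hai Hir Hp Hz L.
  set (l := (z - a) / (th - a)) in *.
  assert (Hl : 0 <= l <= 1) by (unfold l; apply div01; lra).
  assert (Hzl : z = a + (th - a) * l) by (unfold l; field; lra).
  unfold L. fold l.
  assert (0 <= (ir - a) * l <= ir - a) by (split; [apply Rmult_le_pos|]; nra).
  assert (0 <= (th - ir) * l) by (apply Rmult_le_pos; lra).
  assert (0 <= (a * a - a) * (1 - l)) by (apply Rmult_le_pos; nra).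
  repeat split; nra.
Qed.

Lemma third_facts a ir th rho phi1 y : 1 < a -> a <= ir -> ir < th -> a * ir = th ->
  0 < rho <= 1 -> a <= phi1 <= ir -> ir <= a * phi1 ->
  ir <= y < ir + rho * (th - ir) ->
  let T := phi1 + (ir - phi1) * ((y - ir) / (rho * (th - ir))) in
  a <= T <= ir /\ T <= y /\ y <= a * T.
Proof.
  intros Ha Hai Hir Hp Hr Hphi Hphi2 Hy T.
  assert (Hd : 0 < rho * (th - ir)) by nra.
  set (l := (y - ir) / (rho * (th - ir))) in *.
  assert (Hl : 0 <= l <= 1) by (unfold l; apply div01; lra).
  assert (Hzl : y = ir + rho * (th - ir) * l) by (unfold l; field; lra).
  unfold T. repeat split; try nra.
  assert (0 <= (th - ir) * l * (1 - rho)) by (apply Rmult_le_pos; [apply Rmult_le_pos|]; lra).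
  assert (ir * (1 - l) <= a * phi1 * (1 - l)) by (apply Rmult_le_compat_r; lra).
  nra.
Qed.

Lemma ln_mono x y : 0 < x -> x <= y -> ln x <= ln y.
Proof. intros. destruct (Rle_lt_or_eq_dec _ _ H0). left; apply ln_increasing; auto. subst; lra. Qed.

Lemma phi_line th r z : 1 < th -> 0 < r < 1 -> r * th < th ->
  phi_r th r z = r * th + (/ r - r * th) * ((z - r * th) / (th - r * th)).
Proof. intros. unfold phi_r. field. repeat split; lra. Qed.

Lemma Phi_facts th r rho y : 1 < th -> / th < r -> r * r * th <= 1 -> 0 < rho <= 1 ->
  (y < r * th -> Phi th r rho y = r * th) /\
  r * th <= Phi th r rho y <= / r /\
  (y <= th -> y <= r * th * Phi th r rho y) /\
  (r * th <= y -> Phi th r rho y <= y) /\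
  (forall c0 al, 0 <= al <= 1 -> r * th <= exp (c0 + al * ln (r * th)) ->
     / r <= exp (c0 + al * ln th) -> / r <= exp (c0 + al * ln (/ r + rho * (th - / r))) ->
     r * th <= y <= th -> Phi th r rho y <= exp (c0 + al * ln y)).
Proof.
  intros Hth Hr Hrr Hrho.
  assert (Hr0 : 0 < r). { apply Rlt_trans with (/ th); auto. apply Rinv_0_lt_compat; lra. }
  assert (Ha : 1 < r * th).
  { apply (Rmult_lt_compat_r th) in Hr; [|lra]. rewrite Rinv_l in Hr; lra. }
  assert (Hr1 : r < 1) by nra.
  set (a := r * th) in *.
  set (ir := / r).
  assert (Hp : a * ir = th) by (unfold a, ir; field; lra).
  assert (Hai : a <= ir).
  { unfold a, ir. apply (Rmult_le_reg_r r); auto. rewrite Rinv_l; lra. }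
  assert (Hit : ir < th) by nra.
  assert (Hath : a < th) by lra.
  assert (Hline : forall z, phi_r th r z = a + (ir - a) * ((z - a) / (th - a)))
.
  { intros z. unfold a, ir. apply phi_line; unfold a in *; try split; lra. }
  pose proof (line_facts a ir th ir ltac:(lra) Hai Hit Hp ltac:(lra)) as LF1.
  simpl in LF1.
  unfold Phi. fold a. fold ir.
  destruct (Rlt_dec y a) as [H1|H1].
  { repeat split; intros; try lra. nra. }
  destruct (Rlt_dec y ir) as [H2|H2].
  { rewrite Hline.
    pose proof (line_facts a ir th y ltac:(lra) Hai Hit Hp ltac:(lra)) as LF.
    simpl in LF.
    repeat split; intros; try lra.
    apply seg; try lra. }
  rewrite Hline.
  destruct (Rlt_dec y (ir + rho * (th - ir))) as [H3|H3].
  { pose proof (third_facts a ir th rho (a + (ir - a) * ((ir - a) / (th - a))) y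
      ltac:(lra) Hai Hit Hp Hrho ltac:(lra) ltac:(lra) ltac:(lra)) as TF.
    simpl in TF.
    repeat split; intros; try lra.
    assert (Hd : 0 < rho * (th - ir)) by nra.
    replace (rho * (th - ir)) with (ir + rho * (th - ir) - ir) by ring.
    apply seg; try lra.
    apply seg; try lra. }
  assert (Hd : 0 < rho * (th - ir)) by nra.
  assert (ir + rho * (th - ir) <= th) by nra.
  repeat split; intros; try lra.
  all: try (fold ir; lra).
  - apply Rle_trans with (exp (c0 + al * ln (ir + rho * (th - ir)))); auto.
    apply exp_mono. apply Rplus_le_compat_l. apply Rmult_le_compat_l; [lra|].
    apply ln_mono; lra.
Qed.

Lemma le_div x z P : 0 < P -> x * P <= z -> x <= z / P.
Proof. intros. apply (Rmult_le_reg_r P); auto. unfold Rdiv. rewrite Rmult_assoc, Rinv_l; lra. Qed.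

Lemma mul_le_of_div u v D : 0 < D -> D * u <= v -> u <= v / D.
Proof. intros. apply le_div; auto. lra. Qed.

Theorem theorem2 (theta r rho : R) :
  1 < theta ->
  / theta < r -> r <= / sqrt theta ->
  0 < rho -> rho <= 1 ->
  forall (p : list R) (y : R),
    (1 <= length p)%nat ->
    Forall (fun x => 1 <= x <= theta) p ->
    1 <= y <= theta ->
    A_rho_r theta r rho p y / pmax p >=
      Rmax r (/ (r * theta) * Rpower (mult_error (pmax p) y) (s_rho theta r rho)).
Proof.
  intros Hth Hr Hrs Hrho0 Hrho1 p y Hlen HF Hy.
  assert (Hr0 : 0 < r). { apply Rlt_trans with (/ theta); auto. apply Rinv_0_lt_compat; lra. }
  assert (Hrr : r * r * theta <= 1).
  { assert (Hs : 0 < sqrt theta) by (apply sqrt_lt_R0; lra).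
    assert (r * r <= / sqrt theta * / sqrt theta).
    { apply Rmult_le_compat; lra. }
    rewrite <- Rinv_mult, sqrt_sqrt in H by lra.
    apply Rmult_le_compat_r with (r := theta) in H; [|lra].
    rewrite Rinv_l in H; lra. }
  assert (Ha : 1 < r * theta).
  { apply (Rmult_lt_compat_r theta) in Hr; [|lra]. rewrite Rinv_l in Hr; lra. }
  pose proof (Phi_facts theta r rho y Hth Hr Hrr (conj Hrho0 Hrho1)) as
    [F0 [F1 [F2 [F3 F4]]]].
  destruct (pmax_props p theta Hlen HF) as [HPin HPb].
  unfold A_rho_r, A_Phi.
  set (P := pmax p) in *.
  set (T := Phi theta r rho y) in *.
  set (pay := threshold_payoff T p).
  set (a := r * theta) in *.
  set (L := ln a). set (lt := ln theta).
  assert (HL : 0 < L) by (unfold L; rewrite <- ln_1; apply ln_increasing; lra).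
  assert (Hlt2 : 2 * L <= lt).
  { unfold L, lt. replace (2 * ln a) with (ln (a * a)) by (rewrite ln_mult; lra).
    apply ln_mono; [nra|]. unfold a; nra. }
  set (s0 := / rho * (lt / L - 2)).
  assert (Hs0L : s0 * L = / rho * (lt - 2 * L)) by (unfold s0; field; lra).
  assert (Hs0rL : s0 * rho * L = lt - 2 * L) by (unfold s0; field; lra).
  assert (Hirho : 1 <= / rho).
  { apply (Rmult_le_reg_r rho); auto. rewrite Rinv_l; lra. }
  assert (Hs0 : 0 <= s0).
  { unfold s0. apply Rmult_le_pos; [lra|].
    apply (Rmult_le_reg_r L); auto.
    replace ((lt / L - 2) * L) with (lt - 2 * L) by (field; lra). lra. }
  assert (HsL : lt - 2 * L <= s0 * L).
  { rewrite Hs0L. assert (0 <= lt - 2 * L) by lra. nra. }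
  set (al := s0 / (s0 + 1)). set (c0 := L / (s0 + 1)).
  assert (Hcz : forall z, c0 + al * z = (L + s0 * z) / (s0 + 1)).
  { intros; unfold c0, al; field; lra. }
  assert (Hal : 0 <= al <= 1).
  { unfold al. apply div01; lra. }
  assert (Hexpa : exp L = a) by (unfold L; apply exp_ln; lra).
  assert (Hexpt : exp lt = theta) by (unfold lt; apply exp_ln; lra).
  assert (Hir : / r = exp (lt - L)).
  { unfold Rminus. rewrite exp_plus, exp_Ropp, Hexpa, Hexpt. unfold a. field. lra. }
  assert (G1 : a <= exp (c0 + al * ln a)).
  { fold L. rewrite Hcz. replace ((L + s0 * L) / (s0 + 1)) with L by (field; lra). lra. }
  assert (G2 : / r <= exp (c0 + al * ln theta)).
  { rewrite Hir. apply exp_mono. fold lt. rewrite Hcz. apply mul_le_of_div; lra. }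
  assert (G3 : / r <= exp (c0 + al * ln (/ r + rho * (theta - / r)))).
  { assert (Hy0 : / r + rho * (theta - / r) = theta * (1 - (1 - rho) + (1 - rho) * / a)).
    { unfold a. field. lra. }
    assert (Ha0 : 0 < / a) by (apply Rinv_0_lt_compat; lra).
    pose proof (bern (1 - rho) (/ a) Ha0 ltac:(split; lra)) as B.
    pose proof (m_pos (1 - rho) (/ a) Ha0 ltac:(split; lra)) as Bm.
    rewrite ln_Rinv in B by lra. fold L in B.
    rewrite Hy0, ln_mult by lra. fold lt.
    rewrite Hir. apply exp_mono. rewrite Hcz. apply mul_le_of_div; [lra|].
    set (q := ln (1 - (1 - rho) + (1 - rho) * / a)) in *.
    assert (s0 * (- (1 - rho) * L) <= s0 * q) by (apply Rmult_le_compat_l; lra).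
    nra. }
  assert (F4' : a <= y -> T <= exp (c0 + al * ln y)).
  { intros. apply F4; auto; lra. }
  clear F4.
  set (E := mult_error P y).
  assert (HE : 0 < E <= 1).
  { unfold E, mult_error. split.
    - apply Rmin_glb_lt; apply Rdiv_lt_0_compat; lra.
    - destruct (Rle_dec P y).
      + apply Rle_trans with (P / y); [apply Rmin_l|]. apply div01; lra.
      + apply Rle_trans with (y / P); [apply Rmin_r|]. apply div01; lra. }
  assert (HEy : E * P <= y).
  { assert (E <= y / P) by apply Rmin_r.
    apply Rmult_le_compat_r with (r := P) in H; [|lra].
    unfold Rdiv in H. rewrite Rmult_assoc, Rinv_l in H; lra. }
  set (s := s_rho theta r rho).
  assert (Hs1 : 1 <= s) by apply Rmax_l.
  assert (Hss0 : s0 <= s) by apply Rmax_r.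
  set (RE := Rpower E s).
  assert (HlnE : ln E <= 0). { rewrite <- ln_1. apply ln_mono; lra. }
  assert (RE1 : RE <= E).
  { unfold RE, Rpower. rewrite <- (exp_ln E) at 2 by lra. apply exp_mono. nra. }
  assert (RE2 : RE <= exp (s0 * ln E)).
  { unfold RE, Rpower. apply exp_mono. nra. }
  assert (RE0 : 0 < RE) by (unfold RE, Rpower; apply exp_pos).
  apply Rle_ge, Rmax_lub.
  - destruct (payoff_cases T p) as [C|[C1 C2]].
    + fold pay in C. apply le_div; [lra|]. assert (r * P <= a) by (unfold a; nra). lra.
    + fold pay in C1. rewrite Forall_forall in C2. pose proof (C2 P HPin) as HPT. simpl in HPT.
      rewrite C1. apply le_div; [lra|].
      assert (r * T <= 1).
      { apply Rmult_le_reg_l with (/ r). apply Rinv_0_lt_compat; lra.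
        rewrite <- Rmult_assoc, Rinv_l; lra. }
      nra.
  - apply le_div; [lra|].
    destruct (payoff_cases T p) as [C|[C1 C2]].
    + fold pay in C. assert (/ a * RE * P <= / a * (a * T)).
      { rewrite Rmult_assoc. apply Rmult_le_compat_l.
        left; apply Rinv_0_lt_compat; lra. nra. }
      rewrite <- Rmult_assoc, Rinv_l in H by lra. lra.
    + fold pay in C1. rewrite Forall_forall in C2. pose proof (C2 P HPin) as HPT. simpl in HPT.
      rewrite C1.
      assert (RE * P <= a).
      { destruct (Rle_dec P a) as [HPa|HPa].
        - nra.
        - assert (Hay : a <= y).
          { destruct (Rlt_dec y a); auto. 2: lra. rewrite F0 in HPT; auto. lra. }
          assert (HyP : P < y).
          { destruct (Rlt_dec P y); auto. pose proof (F3 Hay). lra. }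
          assert (HEe : E = P / y).
          { unfold E, mult_error. apply Rmin_left.
            apply Rle_trans with 1; [apply div01; lra|].
            apply mul_le_of_div; lra. }
          pose proof (F4' Hay) as HG.
          assert (HlnP : ln P <= c0 + al * ln y).
          { rewrite <- (ln_exp (c0 + al * ln y)). apply ln_mono; lra. }
          rewrite Hcz in HlnP.
          assert (HlnP' : (s0 + 1) * ln P <= L + s0 * ln y).
          { apply Rmult_le_compat_l with (r := s0 + 1) in HlnP; [|lra].
            replace ((s0 + 1) * ((L + s0 * ln y) / (s0 + 1))) with (L + s0 * ln y) in HlnP
              by (field; lra). lra. }
          rewrite HEe in RE2. unfold Rdiv in RE2.
          rewrite ln_mult, ln_Rinv in RE2 by (try apply Rinv_0_lt_compat; lra).
          assert (RE * P <= exp (s0 * (ln P + - ln y)) * exp (ln P)).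
          { rewrite exp_ln by lra. apply Rmult_le_compat_r; lra. }
          rewrite <- exp_plus in H.
          rewrite <- Hexpa.
          apply Rle_trans with (1 := H). apply exp_mono. lra. }
      replace (/ a * RE * P) with (/ a * (RE * P)) by ring.
      apply Rmult_le_reg_l with a; [lra|].
      rewrite <- Rmult_assoc, Rinv_r by lra. lra.
Qed.
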